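(* Let $L/K$ be a nontrivial finite extension inside $\bar K$, $G={\rm Gal}(\tilde L/K)$, $H={\rm Gal}(\tilde L/L)$, and $H^G$ the normal closure of $H$ in $G$. (1) $F=\tilde L^{H^G}$ is the unique intermediate field $K\subseteq F\subseteq L$ such that $F/K$ is Galois of maximum possible degree (among subfields of $L$ Galois over $K$). (2) Define the ascending index $t_K(L)=[F:K]$ and $u_K(L)=[L:F]$. Then $t_K(L)\,u_K(L)=[L:K]$, $t_K(L)=[G:H^G]$, $u_K(L)=[H^G:H]$, and $r_K(L)\mid t_K(L)\,r_F(L)$. (3) There is a unique strictly ascending chain of fields $K=F_0\subsetneq F_1\subsetneq\cdots\subsetneq F_k$ inside $L$ such that for all $i\ge1$, $F_i/F_{i-1}$ is Galois of maximum possible degree among subfields of $L$ Galois over $F_{i-1}$, the chain terminating at $F_k$ with $t_{F_k}(L)=1$. It corresponds (via $F_i=\tilde L^{G_i}$) to the unique strictly descending chain of subgroups $G=G_0\supsetneq G_1\supsetneq\cdots\supsetneq G_k$ with $G_i=H^{G_{i-1}}$ (the normal closure of $H$ in $G_{i-1}$) and $H^{G_k}=G_k$; moreover $t_{F_i}(L)=[G_i:G_{i+1}]$ and $u_{F_i}(L)=[G_{i+1}:H]$. (4) $F_k=L$ iff $L/F_{k-1}$ is Galois. (5) $t_K(L)=1$ iff $H^G=G$ iff the chain in (3) is the singleton $K$. (6) $L/K$ is Galois iff $H^G=1$ iff $H^G=H$ iff the chain in (3) is $K\subsetneq L$. (7) $H$ is a proper normal subgroup of $H^G$ iff ($H^G\ne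 G$, $H^G\neq H$ and $H\trianglelefteq H^G$) iff the chain in (3) is $K\subsetneq F\subsetneq L$.
   Context: $K$ is a perfect field with a fixed algebraic closure $\bar K$; all extensions are finite and contained in $\bar K$. For a finite extension $L/K$, $\tilde L$ denotes its Galois closure in $\bar K$. Writing $L=K(\alpha)$ with $f$ the minimal polynomial of $\alpha$ over $K$, the cluster size $r_K(L)$ is the number of roots of $f$ lying in $L$ (independent of $\alpha$; it equals $|{\rm Aut}(L/K)|$); for an intermediate field $E$, $r_E(L)$ and $t_E(L)$ are defined in the same way with base field $E$. For a subgroup $H$ of a group $G$, $H^G$ is the intersection of all normal subgroups of $G$ containing $H$. *)

(* Defs.v *)
From HB Require Import structures.
From mathcomp Require Import all_boot all_order all_algebra all_fingroup all_solvable all_field.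
Set Implicit Arguments. Unset Strict Implicit. Unset Printing Implicit Defensive.
Import GRing.Theory.
Local Open Scope ring_scope.

Definition ncl (gT : finGroupType) (H G : {set gT}) : {set gT} :=
  (\bigcap_(N : {group gT} | (H \subset N) && (N <| G)) N)%g.

Section FieldDefs.
Variables (F0 : fieldType) (Om : splittingFieldType F0).

Definition is_gal_closure (K L M : {subfield Om}) : Prop :=
  [/\ (L <= M)%VS, galois K M &
      forall M' : {subfield Om}, (L <= M')%VS -> galois K M' -> (M <= M')%VS].

Definition maxgal (E L F : {subfield Om}) : Prop :=
  [/\ (E <= F)%VS, (F <= L)%VS, galois E F &
      forall F' : {subfield Om}, (E <= F')%VS -> (F' <= L)%VS -> galois E F' ->
        (\dim_E F' <= \dim_E F)%N].

Definition tdeg (E L : {subfield Om}) (n : nat) : Prop :=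
  exists F : {subfield Om}, maxgal E L F /\ \dim_E F = n.
Definition udeg (E L : {subfield Om}) (n : nat) : Prop :=
  exists F : {subfield Om}, maxgal E L F /\ \dim_F L = n.

Definition cluster (E L : {subfield Om}) (n : nat) : Prop :=
  exists a : Om, (<<E; a>>%VS = L :> {vspace Om}) /\
    exists s : seq Om, [/\ uniq s,
      forall x, (x \in s) = (x \in L) && root (minPoly E a) x & size s = n].

Definition asc_chain (K L : {subfield Om}) (s : seq {subfield Om}) : Prop :=
  exists k : nat, [/\ size s = k.+1, nth K s 0 = K,
    forall i, (i < k)%N ->
      nth K s i != nth K s i.+1 /\ maxgal (nth K s i) L (nth K s i.+1)
    & tdeg (nth K s k) L 1].
End FieldDefs.

Definition desc_chain (gT : finGroupType) (H G : {set gT}) (gs : seq {set gT}) : Prop :=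
  exists k : nat, [/\ size gs = k.+1, nth G gs 0 = G,
    forall i, (i < k)%N ->
      nth G gs i.+1 = ncl H (nth G gs i) /\ (nth G gs i.+1 \proper nth G gs i)%g
    & ncl H (nth G gs k) = nth G gs k].

(* Main.v *)
Require Import Defs.
From HB Require Import structures.
From mathcomp Require Import all_boot all_order all_algebra all_fingroup all_solvable all_field.
Set Implicit Arguments. Unset Strict Implicit. Unset Printing Implicit Defensive.

Section NclGroup.
Variable gT : finGroupType.
Implicit Types H X N : {group gT}.
Local Open Scope group_scope.

Lemma ncl_group_set (H X : {set gT}) : group_set (ncl H X).
Proof. rewrite /ncl; exact: group_set_bigcap. Qed.
Canonical ncl_group (H X : {set gT}) := group (ncl_group_set H X).

Lemma ncl_min H X N : H \subset N -> N <| X -> ncl H X \subset N.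
Proof. by move=> hN nN; rewrite /ncl (bigcap_inf N) // hN nN. Qed.

Lemma ncl_sub H X : H \subset X -> ncl H X \subset X.
Proof. by move=> hX; apply: ncl_min => //; apply: normal_refl. Qed.

Lemma ncl_supH H X : H \subset ncl H X.
Proof. by rewrite /ncl; apply/bigcapsP => N /andP[]. Qed.

Lemma ncl_normal H X : H \subset X -> ncl H X <| X.
Proof.
move=> hX; rewrite /normal ncl_sub //= /ncl; apply: norms_bigcap.
by apply/bigcapsP => N /andP[_ nN]; apply: normal_norm.
Qed.

Lemma ncl_id H X : H <| X -> ncl H X = H.
Proof.
move=> nH; apply/eqP; by rewrite eqEsubset ncl_min //= ncl_supH.
Qed.

Lemma ncl_eqH H X : H \subset X -> (ncl H X = H) <-> H <| X.
Proof.
move=> hX; split=> [<-|]; first exact: ncl_normal.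
exact: ncl_id.
Qed.

Lemma norm_index_dvd (G H B : {group gT}) : H \subset B -> B <| G ->
  #|'N_G(H) : H| %| #|G : B| * #|'N_B(H) : H|.
Proof.
move=> hB nB; have bG := normal_sub nB; have hG := subset_trans hB bG.
have e1 : 'N_G(H) :&: B = 'N_B(H).
  by rewrite -setIA setIC -setIA (setIidPl bG) setIC.
have hNB : H \subset 'N_B(H) by rewrite subsetI hB normG.
have sNBN : 'N_B(H) \subset 'N_G(H) by rewrite setSI.
rewrite -(Lagrange_index sNBN hNB) dvdn_mul //.
have -> : #|'N_G(H) : 'N_B(H)| = #|'N_G(H) : B| by rewrite -e1 indexgI.
have nNB : 'N_G(H) \subset 'N(B) by rewrite (subset_trans _ (normal_norm nB)) // subsetIl.
rewrite -indexMg -norm_joinEr //.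
apply: indexSg; first exact: joing_subl.
by rewrite join_subG bG subsetIl.
Qed.
End NclGroup.


Section Chain.
Variable gT : finGroupType.
Variables H G : {group gT}.
Hypothesis hG : (H \subset G)%g.
Local Open Scope group_scope.

Fixpoint gi n : {group gT} := if n is n'.+1 then ncl_group H (gi n') else G.

Lemma gi_H n : H \subset gi n.
Proof. by case: n => [|n] //=; apply: ncl_supH. Qed.

Lemma gi_sub n : gi n.+1 \subset gi n.
Proof. exact: (ncl_sub (gi_H n)). Qed.

Lemma gi_G n : gi n \subset G.
Proof. by elim: n => [|n IH] //; apply: subset_trans (gi_sub n) IH. Qed.

Definition fixp n := ncl H (gi n) == gi n.

Lemma fix_exists : exists n, fixp n.
Proof.
have: forall n, (exists2 i, (i <= n)%N & fixp i) \/ (#|gi n| + n <= #|G|)%N.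
  elim=> [|n [[i le_in fi]|IH]]; first by right; rewrite addn0.
  - by left; exists i => //; apply: leq_trans le_in _.
  - case fn: (fixp n); first by left; exists n.
    right; rewrite addnS; apply: leq_trans IH; rewrite ltn_add2r.
    apply: proper_card; rewrite properEneq gi_sub andbT.
    by move: fn; rewrite /fixp /= => /negbT.
case/(_ #|G|.+1) => [[i _ fi]|]; first by exists i.
by rewrite addnS ltnNge leq_addl.
Qed.

Definition k0 := ex_minn fix_exists.

Lemma k0_fix : fixp k0.
Proof. by rewrite /k0; case: ex_minnP. Qed.

Lemma k0_min i : (i < k0)%N -> ~~ fixp i.
Proof.
rewrite /k0; case: ex_minnP => m _ mn lt_im; apply/negP => fi.
by have := mn _ fi; rewrite leqNgt lt_im.
Qed.

Lemma k0_eq n : (forall i, (i < n)%N -> ~~ fixp i) -> fixp n -> k0 = n.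
Proof.
move=> nf fn; apply/eqP; rewrite eqn_leq.
apply/andP; split; rewrite leqNgt; apply/negP => lt.
  by have := k0_min lt; rewrite fn.
by have := nf _ lt; rewrite k0_fix.
Qed.

Lemma gi_fix n : fixp n -> gi n.+1 :=: gi n.
Proof. by move/eqP. Qed.

Definition gs0 : seq {set gT} := [seq (gi i : {set gT}) | i <- iota 0 k0.+1].

Lemma nth_gs0 d i : (i < k0.+1)%N -> nth d gs0 i = gi i.
Proof. by move=> lt; rewrite /gs0 (nth_map 0) ?size_iota // nth_iota. Qed.

Lemma desc_chainP gs : desc_chain H G gs <-> gs = gs0.
Proof.
split.
  case=> k [sz n0 st fin].
  have e : forall i, (i <= k)%N -> nth (G : {set gT}) gs i = gi i.
    elim=> [|i IH] lt; first by rewrite n0.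
    have [-> _] := st i lt. rewrite IH; last exact: ltnW. by [].
  have ek : k0 = k.
    apply: k0_eq; last by rewrite /fixp -e // fin.
    move=> i lt; have [e1 pr] := st i lt.
    rewrite /fixp; apply/negP => /eqP ef.
    move: pr; rewrite e1 e; last exact: ltnW. rewrite ef.
    by rewrite properE subxx.
  apply: (@eq_from_nth _ (G : {set gT})); first by rewrite sz size_map size_iota ek.
  move=> i; rewrite sz => lt; rewrite e; last by rewrite -ltnS.
  by rewrite nth_gs0 // ek.
move=> ->; exists k0; split.
- by rewrite size_map size_iota.
- by rewrite nth_gs0.
- move=> i lt; rewrite !nth_gs0; [|exact: ltnW|exact: lt].
  split; first by [].
  rewrite properEneq gi_sub andbT; exact: k0_min.
- rewrite nth_gs0 //; apply/eqP; exact: k0_fix.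
Qed.
End Chain.


Section Field.
Variables (F0 : fieldType) (Om : splittingFieldType F0) (K L M : {subfield Om}).
Hypotheses (sKL : (K <= L)%VS) (sLM : (L <= M)%VS) (galKM : galois K M).
Local Notation GG := 'Gal(M / K)%G.
Local Notation HH := 'Gal(M / L)%G.

Lemma sKM : (K <= M)%VS. Proof. exact: subv_trans sKL sLM. Qed.

Lemma galEM (E : {subfield Om}) : (K <= E)%VS -> (E <= M)%VS -> galois E M.
Proof. by move=> a b; apply: (galoisS _ galKM); rewrite a b. Qed.

Lemma fixK : fixedField 'Gal(M / K)%g = K.
Proof. exact/galois_fixedField. Qed.

Lemma fixL : fixedField 'Gal(M / L)%g = L.
Proof. apply/galois_fixedField; exact: galEM. Qed.

Lemma HsubG : ('Gal(M / L)%g \subset 'Gal(M / K)%g)%g.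
Proof. exact: galS. Qed.

Lemma maxgalP (E : {subfield Om}) : (K <= E)%VS -> (E <= L)%VS ->
  forall F : {subfield Om},
  maxgal E L F <-> (F = fixedField (ncl 'Gal(M / L)%g 'Gal(M / E)%g) :> {vspace Om}).
Proof.
move=> sKE sEL F; have sEM := subv_trans sEL sLM; have gEM := galEM sKE sEM.
have hGE : ('Gal(M / L)%g \subset 'Gal(M / E)%g)%g := galS M sEL.
pose N := ncl_group 'Gal(M / L)%g 'Gal(M / E)%g.
have nN : (N <| 'Gal(M / E)%g)%g := ncl_normal hGE.
have sNGE := normal_sub nN.
have sEF1 : (E <= fixedField N)%VS by rewrite -(galois_connection _ sEM).
have sF1L : (fixedField N <= L)%VS.
  by rewrite -[X in (_ <= X)%VS]fixL; apply: fixedFieldS; apply: ncl_supH.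
have gF1 : galois E (fixedField N) := normal_fixedField_galois gEM nN.
have big : forall F' : {subfield Om}, (E <= F')%VS -> (F' <= L)%VS -> galois E F' ->
    (F' <= fixedField N)%VS.
  move=> F' sEF' sF'L gF'; have sF'M := subv_trans sF'L sLM.
  have nF' : ('Gal(M / F')%g <| 'Gal(M / E)%g)%g.
    apply: (@normalField_normal _ _ M E F'); first by rewrite sEF' sF'M.
    by case/and3P: gF'.
  have /fixedFieldS : (N \subset 'Gal(M / F')%g)%g by apply: ncl_min => //; apply: galS.
  by rewrite (elimT galois_fixedField (galoisS _ gEM)) // sEF' sF'M.
have dimE : forall F' : {subfield Om}, (E <= F')%VS -> (\dim_E F' * \dim E)%N = \dim F'.
  by move=> F' sEF'; rewrite divnK // field_dimS.
split.
  case=> sEF sFL gF mx; have sFF1 := big F sEF sFL gF.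
  have := mx (fixedField_aspace N) sEF1 sF1L gF1.
  rewrite -(leq_pmul2r (adim_gt0 E)) dimE // dimE // => le.
  by apply/eqP; rewrite eqEdim sFF1.
move=> eF; rewrite /maxgal eF; split => // F' sEF' sF'L gF'.
by apply: leq_div2r; apply: dimvS; apply: big.
Qed.


Lemma tdegP (E : {subfield Om}) : (K <= E)%VS -> (E <= L)%VS -> forall n,
  tdeg E L n <-> n = #|'Gal(M / E) : ncl 'Gal(M / L) 'Gal(M / E)|%g.
Proof.
move=> sKE sEL n; have sEM := subv_trans sEL sLM; have gEM := galEM sKE sEM.
have hGE : ('Gal(M / L)%g \subset 'Gal(M / E)%g)%g := galS M sEL.
pose N := ncl_group 'Gal(M / L)%g 'Gal(M / E)%g.
have sNGE : (N \subset 'Gal(M / E)%g)%g := normal_sub (ncl_normal hGE).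
split.
  case=> F [/(maxgalP sKE sEL) eF <-]; rewrite eF.
  exact: (dim_fixed_galois gEM sNGE).
move=> ->; exists (fixedField_aspace N); split; first exact/(maxgalP sKE sEL).
exact: (dim_fixed_galois gEM sNGE).
Qed.

Lemma udegP (E : {subfield Om}) : (K <= E)%VS -> (E <= L)%VS -> forall n,
  udeg E L n <-> n = #|ncl 'Gal(M / L) 'Gal(M / E) : 'Gal(M / L)|%g.
Proof.
move=> sKE sEL n; have sEM := subv_trans sEL sLM; have gEM := galEM sKE sEM.
have hGE : ('Gal(M / L)%g \subset 'Gal(M / E)%g)%g := galS M sEL.
pose N := ncl_group 'Gal(M / L)%g 'Gal(M / E)%g.
have key : \dim_(fixedField N) L = #|N : 'Gal(M / L)|%g.
  rewrite -[X in \dim_(_) X]fixL -[X in #|X : _|%g](gal_fixedField N).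
  apply: dim_fixed_galois; first exact: fixedField_galois.
  by rewrite gal_fixedField; apply: ncl_supH.
split.
  case=> F [/(maxgalP sKE sEL) eF <-]; rewrite eF; exact: key.
move=> ->; exists (fixedField_aspace N); split; first exact/(maxgalP sKE sEL).
exact: key.
Qed.

End Field.


Lemma size_undup_map_eq (T U V : eqType) (f : T -> U) (g : T -> V) (s : seq T) :
  {in s &, forall x y, (f x == f y) = (g x == g y)} ->
  size (undup (map f s)) = size (undup (map g s)).
Proof.
elim: s => //= x s IH e.
have e' : {in s &, forall x y, (f x == f y) = (g x == g y)}.
  by move=> y z ys zs; apply: e; rewrite inE ?ys ?zs orbT.
have xx : x \in x :: s by rewrite mem_head.
have ex : (f x \in map f s) = (g x \in map g s).
  apply/mapP/mapP => -[y ys exy]; exists y => //; apply/eqP.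
    by rewrite -e ?exy // inE ys orbT.
  by rewrite e ?exy // inE ys orbT.
by rewrite ex; case: ifP => _ /=; rewrite IH.
Qed.

Section Cluster.
Variables (F0 : fieldType) (Om : splittingFieldType F0) (K L M : {subfield Om}).
Hypotheses (sKL : (K <= L)%VS) (sLM : (L <= M)%VS) (galKM : galois K M).

Lemma clusterP (E : {subfield Om}) : (K <= E)%VS -> (E <= L)%VS -> forall r,
  cluster E L r -> r = #|'N_('Gal(M / E))('Gal(M / L)) : 'Gal(M / L)|%g.
Proof.
move=> sKE sEL r [a [eL [s [us ms sz]]]].
have sEM := subv_trans sEL sLM; have gEM := galEM galKM sKE sEM.
have La : a \in L by rewrite -eL memv_adjoin.
have Ma : a \in M := subvP sLM a La.
have fixa : forall g, g \in 'Gal(M / E)%g -> g a = a -> g \in 'Gal(M / L)%g.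
  move=> g gE ga; rewrite gal_kHom //; apply/kAHomP => y.
  rewrite -eL => /Fadjoin_polyP[p Ep ->].
  by rewrite -horner_map /= (fixedPoly_gal sEM gE Ep) ga.
set H := 'Gal(M / L)%g; set GE := 'Gal(M / E)%g.
have HGE : (H \subset GE)%g := galS M sEL.
pose NE := 'N_GE(H)%g.
have memS : forall x, (x \in s) = (x \in [seq (g : gal_of M) a | g <- enum NE]).
  move=> x; rewrite ms; apply/andP/mapP.
    case=> Lx rx; have Mx := subvP sLM x Lx.
    have nEM : normalField E M by case/and3P: gEM.
    have [g gE gax] := normalField_root_minPoly sEM nEM Ma rx.
    exists g => //; rewrite mem_enum inE gE /=.
    have sub : (H \subset H :^ g)%g.
      apply/subsetP => h Hh; rewrite mem_conjg.
      have hE := subsetP HGE h Hh.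
      apply: fixa; first by rewrite groupJ ?groupV.
      rewrite conjgE invgK !galM ?memv_gal //.
      rewrite gax (fixed_gal sLM Hh Lx) -gax -galM // mulgV gal_id //.
    apply/normP; apply/esym/eqP; rewrite eqEcard sub cardJg leqnn //.
  case=> g; rewrite mem_enum inE => /andP[gE gN] ->; split.
    suff : g a \in fixedField H by rewrite /H (fixL sKL sLM galKM).
    apply/fixedFieldP; first exact: memv_gal.
    move=> h Hh; have hJ : (h ^ g^-1)%g \in H by rewrite memJ_norm ?groupV.
    rewrite -galM // conjgCV (@galM _ _ M (h ^ g^-1)%g g a Ma).
    by rewrite (fixed_gal sLM hJ La).
  exact: root_minPoly_gal.
have -> : r = size (undup [seq (g : gal_of M) a | g <- enum NE]).
  rewrite -sz; apply: perm_size; apply: uniq_perm => //; first exact: undup_uniq.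
  by move=> x; rewrite mem_undup memS.
rewrite (@size_undup_map_eq _ _ _ _ (fun g => H :* g)%g).
  rewrite /indexg -(card_uniqP (undup_uniq _)); apply: eq_card => C.
  rewrite mem_undup /rcosets; apply/mapP/imsetP => -[g gN ->];
    by exists g; rewrite ?mem_enum in gN *; rewrite ?rcosetE.
move=> g1 g2; rewrite !mem_enum !inE => /andP[g1E _] /andP[g2E _].
apply/eqP/eqP => [e|/rcoset_eqP].
  apply/rcoset_eqP; rewrite mem_rcoset; apply: fixa; first by rewrite groupM ?groupV.
  by rewrite galM // e -galM // mulgV gal_id.
rewrite mem_rcoset => /(fixed_gal sLM)/(_ La).
rewrite galM // => e.
by rewrite -[in RHS]e -galM ?memv_gal // mulVg gal_id.
Qed.
End Cluster.


Section Main.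
Variables (F0 : fieldType) (Om : splittingFieldType F0) (K L M : {subfield Om}).
Hypotheses (sKL : (K <= L)%VS) (sLM : (L <= M)%VS) (galKM : galois K M).

Definition hG : ('Gal(M / L)%G \subset 'Gal(M / K)%G)%g := galS M sKL.
Local Notation gg i := (gi 'Gal(M / L)%G 'Gal(M / K)%G i).
Local Notation kk := (k0 hG).

Definition s0 : seq {subfield Om} := [seq fixedField_aspace (gg i) | i <- iota 0 kk.+1].

Lemma nth_s0 d i : (i < kk.+1)%N -> nth d s0 i = fixedField_aspace (gg i).
Proof. by move=> lt; rewrite /s0 (nth_map 0) ?size_iota // nth_iota. Qed.

Lemma size_s0 : size s0 = kk.+1.
Proof. by rewrite size_map size_iota. Qed.

Lemma FE_K i : (K <= fixedField (gg i))%VS.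
Proof. by rewrite -(galois_connection _ (sKM sKL sLM)); apply: (gi_G hG). Qed.

Lemma FE_L i : (fixedField (gg i) <= L)%VS.
Proof.
rewrite -[X in (_ <= X)%VS](fixL sKL sLM galKM); apply: fixedFieldS; exact: (gi_H hG).
Qed.

Lemma fix_inj (X Y : {group gal_of M}) :
  fixedField X = fixedField Y -> X :=: Y.
Proof. by move=> e; rewrite -(gal_fixedField X) e gal_fixedField. Qed.

Lemma s0_0 : fixedField_aspace (gg 0) = K.
Proof. by apply: val_inj; rewrite /= (fixK galKM). Qed.

Lemma galois_fixP (X Y : {group gal_of M}) : (Y \subset X)%g ->
  galois (fixedField X) (fixedField Y) = (Y <| X)%g.
Proof.
move=> sYX; have gEM := fixedField_galois X.
have sEF : (fixedField X <= fixedField Y <= M)%VS by rewrite fixedFieldS // fixedField_bound.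
apply/idP/idP => [g|n].
  have nEF : normalField (fixedField X) (fixedField Y) by case/and3P: g.
  by have := normalField_normal sEF nEF; rewrite !gal_fixedField.
have := @normal_fixedField_galois _ _ M (fixedField_aspace X) gEM Y.
by rewrite gal_fixedField; apply.
Qed.

Lemma fixp_tdeg i : fixp 'Gal(M / L)%G 'Gal(M / K)%G i <->
  tdeg (fixedField_aspace (gg i)) L 1.
Proof.
have T := tdegP sKL sLM galKM (FE_K i) (FE_L i) 1.
split=> [fi|td].
  apply/T; rewrite /= gal_fixedField; move/eqP: fi => ->; by rewrite indexgg.
have := T.1 td; rewrite /= gal_fixedField => e.
rewrite /fixp eqEsubset ncl_sub ?(gi_H hG) //= -indexg_eq1 -e.
by [].
Qed.

Lemma asc_chainP s : asc_chain K L s <-> s = s0.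
Proof.
split.
  case=> k [sz n0 st fin].
  have e : forall i, (i <= k)%N -> (nth K s i : {vspace Om}) = fixedField (gg i).
    elim=> [|i IH] lt; first by rewrite n0 (fixK galKM).
    have [_ mx] := st i lt.
    have IH' := IH (ltnW lt).
    have sKE : (K <= nth K s i)%VS by rewrite IH' FE_K.
    have sEL : (nth K s i <= L)%VS by rewrite IH' FE_L.
    move: mx => /(maxgalP sKL sLM galKM sKE sEL); rewrite IH' gal_fixedField.
    have gS : gval (gg i.+1) = ncl 'Gal(M / L)%g (gg i) by reflexivity.
    by rewrite gS.
  have ek : kk = k.
    apply: k0_eq.
      move=> i lt; have [ne _] := st i lt; apply/negP => /gi_fix ef.
      move: ne; have -> : nth K s i.+1 = nth K s i.
        apply: val_inj => /=; rewrite (e i.+1 lt) (e i (ltnW lt)) ef; reflexivity.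
      by rewrite eqxx.
    apply/fixp_tdeg.
    have -> : fixedField_aspace (gg k) = nth K s k.
      by apply: val_inj => /=; rewrite (e k (leqnn k)).
    exact: fin.
  apply: (@eq_from_nth _ K); first by rewrite sz size_s0 ek.
  move=> i; rewrite sz => lt; rewrite nth_s0; last by rewrite ek.
  by apply: val_inj => /=; rewrite (e i lt).
move=> ->; exists kk; split.
- exact: size_s0.
- by rewrite (nth_s0 _ (ltn0Sn _)) s0_0.
- move=> i lt; rewrite (nth_s0 _ (ltnW lt)) (nth_s0 _ (lt : i.+1 < kk.+1)).
  split.
    apply/negP => /eqP ef; have := k0_min lt; rewrite /fixp.
    have := congr1 (fun F : {subfield Om} => (F : {vspace Om})) ef => /= /fix_inj ei /negP; apply; apply/eqP; exact: (esym ei).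
  apply/(maxgalP sKL sLM galKM (FE_K i) (FE_L i)) => /=.
  by rewrite gal_fixedField.
- rewrite (nth_s0 _ (ltnSn _)); apply/fixp_tdeg; exact: k0_fix.
Qed.

End Main.

Unset Implicit Arguments. Set Strict Implicit.

Lemma div_tower a b c : (0 < a)%N -> (0 < b)%N -> (a %| b)%N -> (b %| c)%N ->
  (b %/ a * (c %/ b) = c %/ a)%N.
Proof.
move=> a0 b0 ab /dvdnP[y ->]; case/dvdnP: ab b0 => x -> b0.
rewrite mulnK // mulnK // mulnA mulnK // mulnC //.
Qed.

Theorem theorem7p5 (F0 : fieldType) (Om : splittingFieldType F0)
    (K L M : {subfield Om}) :
  (K <= L)%VS -> K != L -> is_gal_closure K L M ->
  let G := 'Gal(M / K)%g in
  let H := 'Gal(M / L)%g in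
  let HG := ncl H G in
  (* (1) *)
  (forall F : {subfield Om}, maxgal K L F <-> (F = fixedField HG :> {vspace Om}))
  (* (2) *)
  /\ (forall (F : {subfield Om}) (t u : nat), maxgal K L F ->
        t = \dim_K F -> u = \dim_F L ->
        [/\ t * u = \dim_K L, t = #|G : HG|%g, u = #|HG : H|%g
          & forall rK rF, cluster K L rK -> cluster F L rF -> rK %| t * rF])
  (* (3) *)
  /\ ((exists! s, asc_chain K L s) /\ (exists! gs, desc_chain H G gs)
      /\ forall s gs, asc_chain K L s -> desc_chain H G gs ->
         [/\ size s = size gs,
             forall i, i < size s -> (nth K s i = fixedField (nth G gs i) :> {vspace Om}),
             forall i, i < size s -> tdeg (nth K s i) L #|nth G gs i : ncl H (nth G gs i)|%g
           & forall i, i < size s -> udeg (nth K s i) L #|ncl H (nth G gs i) : H|%g])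
  (* (4)-(7) *)
  /\ (forall s, asc_chain K L s ->
      [/\ (* (4) *)
          (1 < size s -> (last K s = L <-> galois (nth K s (size s).-2) L)),
          (* (5) *)
          (tdeg K L 1 <-> HG = G) /\ (HG = G <-> s = [:: K]),
          (* (6) *)
          (galois K L <-> HG = 1%g) /\ (HG = 1%g <-> HG = H) /\ (HG = H <-> s = [:: K; L])
        & (* (7) *)
          ((H \proper HG)%g && (H <| HG)%g <-> [&& HG != G, HG != H & (H <| HG)%g])
          /\ ([&& HG != G, HG != H & (H <| HG)%g] <->
              exists F : {subfield Om}, (F = fixedField HG :> {vspace Om}) /\ s = [:: K; F; L])]).
Proof.
move=> sKL nKL [sLM galKM minM]; cbv zeta.
split.
  move=> F; exact: (maxgalP sKL sLM galKM (subvv K) sKL F).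
split.
  move=> F t u mF et eu.
  have eF := (maxgalP sKL sLM galKM (subvv K) sKL F).1 mF.
  have [sKF sFL _ _] := mF.
  have Ht := (tdegP sKL sLM galKM (subvv K) sKL t).1 (ex_intro _ F (conj mF (esym et))).
  have Hu := (udegP sKL sLM galKM (subvv K) sKL u).1 (ex_intro _ F (conj mF (esym eu))).
  split; [|exact: Ht|exact: Hu|].
    by rewrite et eu div_tower ?adim_gt0 ?field_dimS ?sKF ?sFL.
  move=> rK rF cK cF.
  rewrite (clusterP sKL sLM galKM (subvv K) sKL cK) (clusterP sKL sLM galKM sKF sFL cF) Ht.
  rewrite eF (gal_fixedField (ncl_group _ _)).
  exact: (@norm_index_dvd _ 'Gal(M / K)%G 'Gal(M / L)%G (ncl_group _ _) (ncl_supH _ _) (ncl_normal (hG M sKL))).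
split.
  split.
    exists (s0 M sKL); split; first exact/(asc_chainP sKL sLM galKM).
    by move=> s' /(asc_chainP sKL sLM galKM) ->.
  split.
    exists (gs0 (hG M sKL)); split; first exact/(desc_chainP (hG M sKL)).
    by move=> gs' /(desc_chainP (hG M sKL)) ->.
  move=> s gs /(asc_chainP sKL sLM galKM) -> /(desc_chainP (hG M sKL)) ->.
  split.
  - by rewrite size_s0 size_map size_iota.
  - by move=> i; rewrite size_s0 => lt; rewrite (nth_s0 _ lt) (nth_gs0 _ lt).
  - move=> i; rewrite size_s0 => lt; rewrite (nth_s0 _ lt) (nth_gs0 _ lt).
    apply/(tdegP sKL sLM galKM (FE_K sKL sLM i) (FE_L sKL sLM galKM i)).
    by rewrite /= gal_fixedField.
  - move=> i; rewrite size_s0 => lt; rewrite (nth_s0 _ lt) (nth_gs0 _ lt).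
    apply/(udegP sKL sLM galKM (FE_K sKL sLM i) (FE_L sKL sLM galKM i)).
    by rewrite /= gal_fixedField.
move=> s /(asc_chainP sKL sLM galKM) ->.
have fK := fixK galKM.
have fL := fixL sKL sLM galKM.
have HG0 := hG M sKL.
have HHG := ncl_supH 'Gal(M / L)%G 'Gal(M / K)%G.
have gKLn : galois K L = ('Gal(M / L) <| 'Gal(M / K))%g.
  by have := galois_fixP HG0; rewrite fK fL.
have H1 : ('Gal(M / L) <| 'Gal(M / K))%g -> 'Gal(M / L)%g = 1%g.
  move=> nH; have gKL : galois K L by rewrite gKLn.
  have ML := minM L (subvv L) gKL.
  apply/trivgP; apply/subsetP => x Hx; rewrite inE; apply/gal_eqP => y My.
  rewrite gal_id; apply: (fixed_gal sLM Hx); exact: (subvP ML y My).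
have gal_iff : galois K L <-> ncl 'Gal(M / L)%g 'Gal(M / K)%g = 1%g.
  split => [gKL|e].
    have nH : ('Gal(M / L) <| 'Gal(M / K))%g by rewrite -gKLn.
    rewrite (ncl_id nH); exact: H1 nH.
  rewrite gKLn; have -> : 'Gal(M / L)%g = 1%g by apply/trivgP; rewrite -e; exact: HHG.
  exact: normal1.
split.
- rewrite size_s0 => lt1.
  have [j ej] : exists j, k0 (hG M sKL) = j.+1.
    by exists (k0 (hG M sKL)).-1; rewrite prednK.
  have ltj : (j < (k0 (hG M sKL)).+1)%N by rewrite ej ltnW.
  rewrite -nth_last !size_s0 (nth_s0 _ (ltnSn _)).
  have -> : (k0 (hG M sKL)).+1.-2 = j by rewrite ej.
  rewrite (nth_s0 _ ltj) ej.
  have gjn : galois (fixedField (gi 'Gal(M / L)%G 'Gal(M / K)%G j)) L =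
      ('Gal(M / L) <| gi 'Gal(M / L)%G 'Gal(M / K)%G j)%g.
    by have := galois_fixP (gi_H HG0 j); rewrite fL.
  split => [e | g].
    have e' : fixedField (gi 'Gal(M / L)%G 'Gal(M / K)%G j.+1) = fixedField 'Gal(M / L)%G.
      by rewrite fL; exact: (congr1 val e).
    have eH := fix_inj e'.
    rewrite /= gjn; apply/(ncl_eqH (gi_H HG0 j)); exact: eH.
  move: g; rewrite /= gjn => nH; apply: val_inj => /=.
  change (fixedField (ncl 'Gal(M / L)%g (gi 'Gal(M / L)%G 'Gal(M / K)%G j)) = L).
  rewrite (ncl_id nH); exact: fL.
- split.
    have T := tdegP sKL sLM galKM (subvv K) sKL 1.
    split => [td|e].
      have e := T.1 td.
      apply/eqP; rewrite eqEsubset (ncl_sub HG0) /= -indexg_eq1 -e.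
      exact: eqxx.
    by apply/T; rewrite e indexgg.
  split => [e|e].
    have ek : k0 (hG M sKL) = 0%N.
      apply: k0_eq; first by move=> i.
      rewrite /fixp /=; apply/eqP; exact: e.
    rewrite /s0 ek /=.
    by rewrite (s0_0 L galKM).
  have := congr1 size e; rewrite size_s0 => -[ek].
  by have := k0_fix (hG M sKL); rewrite ek /fixp /= => /eqP.
- split; first exact: gal_iff.
  split.
    split => e.
      have H1' : 'Gal(M / L)%g = 1%g by apply/trivgP; rewrite -e; exact: HHG.
      by rewrite e H1'.
    apply/gal_iff; rewrite gKLn; exact/(ncl_eqH HG0).
  split => e.
    have nH : ('Gal(M / L) <| 'Gal(M / K))%g by exact/(ncl_eqH HG0).
    have HneG : 'Gal(M / L)%g != 'Gal(M / K)%g.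
      apply/eqP => eHG; have := congr1 (fun A => fixedField A) eHG.
      rewrite /= fL fK => eLK.
      by rewrite (val_inj eLK) eqxx in nKL.
    have ek : k0 (hG M sKL) = 1%N.
      apply: k0_eq.
        case=> [|i] // _; rewrite /fixp /= e; exact: HneG.
      rewrite /fixp /=; rewrite e ncl_id ?normal_refl //.
    rewrite /s0 ek /= (s0_0 L galKM); congr [:: _; _].
    apply: val_inj => /=.
    change (fixedField (ncl 'Gal(M / L)%g 'Gal(M / K)%g) = L).
    rewrite e; exact: fL.
  have := congr1 size e; rewrite size_s0 => -[ek].
  have := congr1 (nth K ^~ 1%N) e; rewrite (nth_s0 _ (_ : 1 < (k0 (hG M sKL)).+1)%N);
    last by rewrite ek.
  move=> e1.
  have e' : fixedField (gi 'Gal(M / L)%G 'Gal(M / K)%G 1) = fixedField 'Gal(M / L)%G.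
    by rewrite fL; exact: (congr1 val e1).
  exact: (fix_inj e').
- have nG := ncl_normal HG0.
  split.
    split.
      case/andP => pr nH.
      have neH : ncl 'Gal(M / L)%g 'Gal(M / K)%g != 'Gal(M / L)%g.
        by move: pr; rewrite properEneq eq_sym => /andP[].
      apply/and3P; split => //.
      apply/eqP => e; move/negP: neH; apply; apply/eqP; apply: ncl_id.
      by move: nH; rewrite e.
    case/and3P => _ neH nH.
    by rewrite properEneq eq_sym neH HHG nH.
  split.
    case/and3P => neG neH nH.
    have ek : k0 (hG M sKL) = 2%N.
      apply: k0_eq.
        case=> [|[|i]] // _; rewrite /fixp /=; by [ | rewrite (ncl_id nH) eq_sym].
      rewrite /fixp /=.
      change (ncl 'Gal(M / L)%g (ncl 'Gal(M / L)%g (ncl 'Gal(M / L)%g 'Gal(M / K)%g))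
        == ncl 'Gal(M / L)%g (ncl 'Gal(M / L)%g 'Gal(M / K)%g)).
      by rewrite (ncl_id nH) ncl_id ?normal_refl.
    exists (fixedField_aspace (gi 'Gal(M / L)%G 'Gal(M / K)%G 1)); split; first by [].
    rewrite /s0 ek /= (s0_0 L galKM); congr [:: _; _; _].
    apply: val_inj => /=.
    change (fixedField (ncl 'Gal(M / L)%g (ncl 'Gal(M / L)%g 'Gal(M / K)%g)) = L).
    rewrite (ncl_id nH); exact: fL.
  case=> F [eF e].
  have := congr1 size e; rewrite size_s0 => -[ek].
  have n0 : ~~ fixp 'Gal(M / L)%G 'Gal(M / K)%G 0 by apply: (@k0_min _ _ _ (hG M sKL)); rewrite ek.
  have n1 : ~~ fixp 'Gal(M / L)%G 'Gal(M / K)%G 1 by apply: (@k0_min _ _ _ (hG M sKL)); rewrite ek.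
  have := congr1 (nth K ^~ 2%N) e; rewrite (nth_s0 _ (_ : 2 < (k0 (hG M sKL)).+1)%N);
    last by rewrite ek.
  move=> e2.
  have e' : fixedField (gi 'Gal(M / L)%G 'Gal(M / K)%G 2) = fixedField 'Gal(M / L)%G.
    by rewrite fL; exact: (congr1 val e2).
  have e2' : ncl 'Gal(M / L)%g (ncl 'Gal(M / L)%g 'Gal(M / K)%g) = 'Gal(M / L)%g.
    exact: (fix_inj e').
  have nH : ('Gal(M / L) <| ncl 'Gal(M / L) 'Gal(M / K))%g.
    by rewrite -[X in (X <| _)%g]e2'; apply: ncl_normal; exact: HHG.
  apply/and3P; split => //.
  by move: n1; rewrite /fixp /= e2' eq_sym.
Qed.
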